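(* For all $\alpha\in\mathbb R$ and $\rho>1$, $$\lim_{n\to\infty}\max_{Q\in\mathcal P_n(\rho)}D_{\mathrm A}^{(\alpha)}(Q\|U_n)=\Delta(\alpha,\rho),$$ where, for $\alpha\notin\{0,1\}$, $$\Delta(\alpha,\rho)=\frac1{\alpha(\alpha-1)}\Bigg[\frac{\big(\frac{\rho^\alpha-1}{\alpha}\big)^{\alpha}\big(\frac{\rho-\rho^\alpha}{1-\alpha}\big)^{1-\alpha}}{\rho-1}-1\Bigg],$$ and $\Delta(1,\rho)=\Delta(0,\rho)=\frac{\rho\ln\rho}{\rho-1}-\ln\big(\frac{e\rho\ln\rho}{\rho-1}\big)$. In particular, for all $n\ge2$, $\max_{Q\in\mathcal P_n(\rho)}D(Q\|U_n)\le\frac{\rho\log\rho}{\rho-1}-\log\big(\frac{e\rho\ln\rho}{\rho-1}\big)$, and this bound is asymptotically tight as $n\to\infty$.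
   Context: $\mathcal P_n(\rho)$: probability mass functions on $\{1,\dots,n\}$ with all masses positive and ratio of maximal to minimal mass at most $\rho$; $U_n$ uniform on $\{1,\dots,n\}$. The Alpha-divergence is $D_{\mathrm A}^{(\alpha)}(P\|Q):=\sum_xQ(x)u_\alpha(P(x)/Q(x))$ with $u_\alpha(t)=\frac{t^\alpha-\alpha(t-1)-1}{\alpha(\alpha-1)}$ for $\alpha\notin\{0,1\}$, $u_1(t)=t\ln t+1-t$, $u_0(t)=-\ln t$. $D(P\|Q)=\sum_xP(x)\log\frac{P(x)}{Q(x)}$ with logarithm in an arbitrary base. *)

(* Defs.v *)
From Stdlib Require Import Reals Lra.
Open Scope R_scope.

Fixpoint rsum (n : nat) (f : nat -> R) : R :=
  match n with O => 0 | S k => rsum k f + f k end.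

(* P_n(rho): pmfs on {1..n}, represented on indices 0..n-1, all masses
   positive, ratio max/min <= rho *)
Definition in_P (n : nat) (rho : R) (Q : nat -> R) : Prop :=
  (forall i, (i < n)%nat -> 0 < Q i) /\
  rsum n Q = 1 /\
  (forall i j, (i < n)%nat -> (j < n)%nat -> Q i <= rho * Q j).

Definition unif (n : nat) : R := / INR n.

Definition u_alpha (alpha t : R) : R :=
  if Req_EM_T alpha 1 then t * ln t + 1 - t
  else if Req_EM_T alpha 0 then - ln t
  else (Rpower t alpha - alpha * (t - 1) - 1) / (alpha * (alpha - 1)).

Definition alphaDiv (n : nat) (alpha : R) (P Q : nat -> R) : R :=
  rsum n (fun x => Q x * u_alpha alpha (P x / Q x)).

Definition log_b (b x : R) : R := ln x / ln b.
Definition KL (n : nat) (b : R) (P Q : nat -> R) : R :=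
  rsum n (fun x => P x * log_b b (P x / Q x)).

Definition is_max_over_P (n : nat) (rho : R) (F : (nat -> R) -> R) (m : R) : Prop :=
  (exists Q, in_P n rho Q /\ F Q = m) /\
  (forall Q, in_P n rho Q -> F Q <= m).

Definition DeltaAlpha (alpha rho : R) : R :=
  if Req_EM_T alpha 1 then rho * ln rho / (rho - 1) - ln (exp 1 * rho * ln rho / (rho - 1))
  else if Req_EM_T alpha 0 then rho * ln rho / (rho - 1) - ln (exp 1 * rho * ln rho / (rho - 1))
  else / (alpha * (alpha - 1)) *
       (Rpower ((Rpower rho alpha - 1) / alpha) alpha *
        Rpower ((rho - Rpower rho alpha) / (1 - alpha)) (1 - alpha) / (rho - 1) - 1).

(* Main.v *)
Require Import Defs.
From Stdlib Require Import Reals Lra Lia.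
From Coquelicot Require Import Coquelicot.
Open Scope R_scope.

Lemma rsum_ext n f g : (forall i, (i < n)%nat -> f i = g i) -> rsum n f = rsum n g.
Proof.
  induction n; simpl; intros H; auto.
  rewrite IHn by (intros; apply H; lia). rewrite H by lia. reflexivity.
Qed.

Lemma rsum_lin n a b c f g :
  rsum n (fun i => a * f i + b * g i + c) = a * rsum n f + b * rsum n g + INR n * c.
Proof.
  induction n; cbn [rsum]. simpl; ring. rewrite IHn. rewrite S_INR. ring.
Qed.

Lemma rsum_scal n a f : rsum n (fun i => a * f i) = a * rsum n f.
Proof. induction n; simpl. ring. rewrite IHn; ring. Qed.

Lemma rsum_pos n f : (forall i, (i < n)%nat -> 0 < f i) -> (0 < n)%nat -> 0 < rsum n f.
Proof.
  induction n; simpl; intros H Hn. lia.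
  destruct n. simpl. rewrite Rplus_0_l. apply H; lia.
  assert (0 < rsum (S n) f) by (apply IHn; intros; try apply H; lia).
  assert (0 < f (S n)) by (apply H; lia). lra.
Qed.

Lemma rsum_nonneg n f : (forall i, (i < n)%nat -> 0 <= f i) -> 0 <= rsum n f.
Proof.
  induction n; simpl; intros H. lra.
  assert (0 <= rsum n f) by (apply IHn; intros; apply H; lia).
  assert (0 <= f n) by (apply H; lia). lra.
Qed.

Definition upd (z : nat -> R) (m : nat) (t : R) : nat -> R :=
  fun i => if Nat.eqb i m then t else z i.

Lemma rsum_upd n z m t (h : R -> R) : (m < n)%nat ->
  rsum n (fun i => h (upd z m t i)) = h t + rsum n (fun i => if Nat.eqb i m then 0 else h (z i)).
Proof.
  induction n; intros Hm. lia.
  simpl. unfold upd at 2.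
  destruct (Nat.eqb n m) eqn:E.
  - apply Nat.eqb_eq in E; subst.
    rewrite (rsum_ext m _ (fun i => h (z i))).
    rewrite (rsum_ext m (fun i => if Nat.eqb i m then 0 else h (z i)) (fun i => h (z i))). ring.
    intros i Hi; destruct (Nat.eqb i m) eqn:E; [apply Nat.eqb_eq in E; lia|auto].
    intros i Hi; unfold upd; destruct (Nat.eqb i m) eqn:E; [apply Nat.eqb_eq in E; lia|auto].
  - assert (m < n)%nat. { apply Nat.eqb_neq in E. lia. }
    rewrite IHn by auto. ring.
Qed.

Fixpoint cnt (rho : R) (n : nat) (z : nat -> R) : nat :=
  match n with O => O | S m => (cnt rho m z + if Req_EM_T (z m) rho then 1 else 0)%nat end.

Lemma rsum_two n rho z (h : R -> R) : rho <> 1 ->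
  (forall i, (i < n)%nat -> z i = 1 \/ z i = rho) ->
  rsum n (fun i => h (z i)) = INR (cnt rho n z) * h rho + (INR n - INR (cnt rho n z)) * h 1
  /\ (cnt rho n z <= n)%nat.
Proof.
  intros Hr. induction n; intros H; cbn [rsum cnt]. simpl; split; [ring|lia].
  destruct IHn as [IH Hc]. intros; apply H; lia.
  rewrite IH. destruct (Req_EM_T (z n) rho) as [E|E].
  - rewrite E. split; [|lia]. rewrite plus_INR, (S_INR n). change (INR 1) with 1. ring.
  - destruct (H n) as [E1|E1]; try lia; [|contradiction].
    rewrite E1. split; [|lia]. rewrite Nat.add_0_r, S_INR. ring.
Qed.

Definition twoY (rho : R) (k : nat) : nat -> R := fun i => if Nat.ltb i k then rho else 1.

Lemma rsum_S n f : rsum (S n) f = rsum n f + f n.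
Proof. reflexivity. Qed.

Lemma rsum_const n c : rsum n (fun _ => c) = INR n * c.
Proof. induction n; cbn [rsum]. simpl; ring. rewrite IHn, S_INR; ring. Qed.

Lemma rsum_twoY n k rho (h : R -> R) : (k <= n)%nat ->
  rsum n (fun i => h (twoY rho k i)) = INR k * h rho + (INR n - INR k) * h 1.
Proof.
  induction n; intros Hk. assert (k = 0)%nat by lia. subst. simpl. ring.
  destruct (Nat.eq_dec k (S n)).
  - subst. rewrite rsum_S. unfold twoY at 2. rewrite (proj2 (Nat.ltb_lt n (S n))) by lia.
    rewrite (rsum_ext n _ (fun _ => h rho)).
    2:{ intros i Hi. unfold twoY. rewrite (proj2 (Nat.ltb_lt i (S n))) by lia. auto. }
    rewrite rsum_const, S_INR. ring.
  - rewrite rsum_S. rewrite IHn by lia. unfold twoY at 1. rewrite (proj2 (Nat.ltb_ge n k)) by lia.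
    rewrite S_INR. ring.
Qed.

Fixpoint rmin (n : nat) (Q : nat -> R) : R :=
  match n with O => Q O | S O => Q O | S m => Rmin (rmin m Q) (Q m) end.

Lemma rmin_spec n Q : (1 <= n)%nat ->
  (forall i, (i < n)%nat -> rmin n Q <= Q i) /\ exists i, (i < n)%nat /\ rmin n Q = Q i.
Proof.
  induction n; intros Hn. lia.
  destruct n. simpl. split. intros i Hi. assert (i = 0)%nat by lia. subst; lra. exists 0%nat; split; auto.
  destruct IHn as [H1 [j [Hj Ej]]]. lia.
  change (rmin (S (S n)) Q) with (Rmin (rmin (S n) Q) (Q (S n))).
  split.
  - intros i Hi. destruct (Nat.eq_dec i (S n)). subst. apply Rmin_r.
    eapply Rle_trans. apply Rmin_l. apply H1; lia.
  - unfold Rmin. destruct (Rle_dec _ _). exists j; split; auto. exists (S n); split; auto.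
Qed.

Fixpoint mx (G : nat -> R) (m : nat) : R :=
  match m with O => G O | S k => Rmax (mx G k) (G (S k)) end.

Lemma mx_spec G m : (forall k, (k <= m)%nat -> G k <= mx G m) /\ exists k, (k <= m)%nat /\ mx G m = G k.
Proof.
  induction m; simpl. split. intros k Hk; assert (k=0)%nat by lia; subst; lra. exists 0%nat; split; auto.
  destruct IHm as [H1 [j [Hj Ej]]]. split.
  - intros k Hk. destruct (Nat.eq_dec k (S m)). subst; apply Rmax_r.
    eapply Rle_trans. apply H1; lia. apply Rmax_l.
  - unfold Rmax. destruct (Rle_dec _ _). exists (S m); split; auto. exists j; split; auto; lia.
Qed.

Lemma floor_ex x N : 0 <= x -> x <= INR N -> exists k, (k <= N)%nat /\ INR k <= x <= INR k + 1.
Proof.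
  induction N; intros H1 H2. exists 0%nat. simpl in *. split; [lia|lra].
  rewrite S_INR in H2. destruct (Rle_dec x (INR N)).
  destruct IHN as [k [Hk Hx]]; auto. exists k; split; auto.
  exists N. split; [lia|lra].
Qed.

Lemma qconv f df a b : a < b ->
  (forall x, a <= x <= b -> derivable_pt_lim f x (df x)) ->
  (forall t, a <= t <= b -> (forall x, a < x < t -> df x <= 0) \/ (forall x, t < x < b -> 0 <= df x)) ->
  forall t, a <= t <= b -> f t <= Rmax (f a) (f b).
Proof.
  intros Hab Hd Hs t Ht.
  destruct (Hs t Ht) as [H|H].
  - destruct (Req_dec t a). subst; apply Rmax_l.
    destruct (MVT_cor2 f df a t) as [c [E Hc]]. lra. intros; apply Hd; lra.
    assert (df c <= 0) by (apply H; lra).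
    assert (f t - f a <= 0). rewrite E. apply Rmult_le_0_r; lra.
    eapply Rle_trans; [|apply Rmax_l]. lra.
  - destruct (Req_dec t b). subst; apply Rmax_r.
    destruct (MVT_cor2 f df t b) as [c [E Hc]]. lra. intros; apply Hd; lra.
    assert (0 <= df c) by (apply H; lra).
    assert (0 <= f b - f t). rewrite E. apply Rmult_le_pos; lra.
    eapply Rle_trans; [|apply Rmax_r]. lra.
Qed.

Lemma qconv2 f df P sg a b : a < b ->
  (forall x, a <= x <= b -> derivable_pt_lim f x (df x)) ->
  (forall x, a <= x <= b -> df x = P x * sg x /\ 0 < P x) ->
  (forall x y, a <= x <= y -> y <= b -> sg x <= sg y) ->
  forall t, a <= t <= b -> f t <= Rmax (f a) (f b).
Proof.
  intros Hab Hd HP Hm. apply (qconv f df); auto.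
  intros t Ht. destruct (Rle_dec (sg t) 0).
  - left. intros x Hx. destruct (HP x) as [E Px]. lra. rewrite E.
    assert (sg x <= sg t) by (apply Hm; lra). nra.
  - right. intros x Hx. destruct (HP x) as [E Px]. lra. rewrite E.
    assert (sg t <= sg x) by (apply Hm; lra). nra.
Qed.

Section Generic.
Variables (rho : R) (F : nat -> (nat -> R) -> R) (psi : R -> R) (Psi : nat -> R -> R -> R)
  (g : R -> R) (Delta bs : R).
Hypothesis Hrho : 1 < rho.
Hypothesis Fext : forall n Q Q', (forall i, (i < n)%nat -> Q i = Q' i) -> F n Q = F n Q'.
Hypothesis Hcl : forall n y, (1 <= n)%nat -> (forall i, (i < n)%nat -> 0 < y i) ->
  F n (fun i => y i / rsum n y) = Psi n (rsum n (fun i => psi (y i))) (rsum n y).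
Hypothesis H1D : forall n C D, (1 <= n)%nat -> 0 <= D -> forall t, 1 <= t <= rho ->
  Psi n (psi t + C) (t + D) <= Rmax (Psi n (psi 1 + C) (1 + D)) (Psi n (psi rho + C) (rho + D)).
Hypothesis Hg : forall n k, (1 <= n)%nat -> (k <= n)%nat ->
  Psi n (INR k * psi rho + (INR n - INR k) * psi 1) (INR k * rho + (INR n - INR k)) = g (INR k / INR n).
Hypothesis Hle : forall b, 0 <= b <= 1 -> g b <= Delta.
Hypothesis Hbs : 0 <= bs <= 1.
Hypothesis Hgbs : g bs = Delta.
Hypothesis Hcont : continuity_pt g bs.

Definition AA n y := rsum n (fun i => psi (y i)).

Lemma push_step n z m : (1 <= n)%nat -> (m < n)%nat -> (forall i, (i < n)%nat -> 1 <= z i <= rho) ->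
  exists v, (v = 1 \/ v = rho) /\
    Psi n (AA n z) (rsum n z) <= Psi n (AA n (upd z m v)) (rsum n (upd z m v)).
Proof.
  intros Hn Hm Hz.
  assert (E : forall t, AA n (upd z m t) = psi t + rsum n (fun i => if Nat.eqb i m then 0 else psi (z i))).
  { intros t. unfold AA. apply (rsum_upd n z m t psi Hm). }
  assert (E2 : forall t, rsum n (upd z m t) = t + rsum n (fun i => if Nat.eqb i m then 0 else z i)).
  { intros t. apply (rsum_upd n z m t (fun x => x) Hm). }
  assert (Ez : AA n z = AA n (upd z m (z m)) /\ rsum n z = rsum n (upd z m (z m))).
  { split; apply rsum_ext; intros i Hi; unfold upd; destruct (Nat.eqb i m) eqn:Q; auto;
    apply Nat.eqb_eq in Q; subst; auto. }
  destruct Ez as [Ez1 Ez2]. rewrite Ez1, Ez2, E, E2.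
  assert (HD : 0 <= rsum n (fun i => if Nat.eqb i m then 0 else z i)).
  { apply rsum_nonneg. intros i Hi. destruct (Nat.eqb i m). lra. specialize (Hz i Hi); lra. }
  pose proof (H1D n (rsum n (fun i => if Nat.eqb i m then 0 else psi (z i))) _ Hn HD (z m) (Hz m Hm)) as H.
  unfold Rmax in H. destruct (Rle_dec _ _) in H.
  - exists rho. split; auto. rewrite E, E2. auto.
  - exists 1. split; auto. rewrite E, E2. auto.
Qed.

Lemma push n y : (1 <= n)%nat -> (forall i, (i < n)%nat -> 1 <= y i <= rho) ->
  exists z, (forall i, (i < n)%nat -> z i = 1 \/ z i = rho) /\
    Psi n (AA n y) (rsum n y) <= Psi n (AA n z) (rsum n z).
Proof.
  intros Hn Hy.
  assert (forall m, (m <= n)%nat -> exists z, (forall i, (i < n)%nat -> 1 <= z i <= rho) /\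
     (forall i, (i < m)%nat -> z i = 1 \/ z i = rho) /\
     Psi n (AA n y) (rsum n y) <= Psi n (AA n z) (rsum n z)).
  { induction m; intros Hm.
    - exists y. split; auto. split. intros; lia. lra.
    - destruct IHm as [z [Z1 [Z2 Z3]]]. lia.
      destruct (push_step n z m Hn ltac:(lia) Z1) as [v [Hv Hle2]].
      exists (upd z m v). split; [|split].
      + intros i Hi. unfold upd. destruct (Nat.eqb i m); auto. destruct Hv; subst; lra.
      + intros i Hi. unfold upd. destruct (Nat.eqb i m) eqn:Q; auto. apply Z2.
        apply Nat.eqb_neq in Q. lia.
      + lra. }
  destruct (H n (le_n n)) as [z [_ [Z2 Z3]]]. exists z; auto.
Qed.

Definition GG n k := g (INR k / INR n).
Definition MM n := mx (GG n) n.
Definition twoQ n k := fun i => twoY rho k i / rsum n (twoY rho k).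

Lemma twoY_bounds k i : 1 <= twoY rho k i <= rho.
Proof. unfold twoY. destruct (Nat.ltb i k); lra. Qed.

Lemma twoQ_in n k : (1 <= n)%nat -> in_P n rho (twoQ n k).
Proof.
  intros Hn. assert (HS : 0 < rsum n (twoY rho k)).
  { apply rsum_pos; [|lia]. intros i _. pose proof (twoY_bounds k i); lra. }
  split; [|split].
  - intros i _. unfold twoQ. pose proof (twoY_bounds k i). apply Rdiv_lt_0_compat; lra.
  - unfold twoQ. unfold Rdiv. rewrite (rsum_ext n _ (fun i => / rsum n (twoY rho k) * twoY rho k i)).
    rewrite rsum_scal. field. lra. intros; ring.
  - intros i j _ _. unfold twoQ. pose proof (twoY_bounds k i). pose proof (twoY_bounds k j).
    unfold Rdiv. rewrite <- Rmult_assoc. apply Rmult_le_compat_r. left; apply Rinv_0_lt_compat; lra. nra.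
Qed.

Lemma F_twoQ n k : (1 <= n)%nat -> (k <= n)%nat -> F n (twoQ n k) = GG n k.
Proof.
  intros Hn Hk. unfold twoQ. rewrite Hcl; auto.
  2:{ intros i _. pose proof (twoY_bounds k i); lra. }
  unfold GG. rewrite <- Hg by auto.
  rewrite (rsum_twoY n k rho psi Hk). pose proof (rsum_twoY n k rho (fun x => x) Hk) as E2. cbv beta in E2.
  change (rsum n (twoY rho k)) with (rsum n (fun i => twoY rho k i)). rewrite E2. f_equal. ring.
Qed.

Lemma F_le n Q : (1 <= n)%nat -> in_P n rho Q -> F n Q <= MM n.
Proof.
  intros Hn [Hp [Hs Hr]].
  destruct (rmin_spec n Q Hn) as [Hm1 [i0 [Hi0 Ei0]]].
  set (c := rmin n Q) in *.
  assert (Hc : 0 < c) by (rewrite Ei0; apply Hp; auto).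
  set (y := fun i => Q i / c).
  assert (Hy : forall i, (i < n)%nat -> 1 <= y i <= rho).
  { intros i Hi. unfold y. split.
    - apply (Rmult_le_reg_r c); auto. unfold Rdiv. rewrite Rmult_assoc, Rinv_l; lra || (specialize (Hm1 i Hi); lra).
    - apply (Rmult_le_reg_r c); auto. unfold Rdiv. rewrite Rmult_assoc, Rinv_l by lra. rewrite Rmult_1_r.
      rewrite Ei0. apply Hr; auto. }
  assert (HSy : rsum n y = / c).
  { unfold y, Rdiv. rewrite (rsum_ext n _ (fun i => / c * Q i)) by (intros; ring).
    rewrite rsum_scal, Hs. ring. }
  assert (EQ : F n Q = F n (fun i => y i / rsum n y)).
  { apply Fext. intros i Hi. rewrite HSy. unfold y. field. lra. }
  rewrite EQ, Hcl; auto. 2:{ intros i Hi; specialize (Hy i Hi); lra. }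
  destruct (push n y Hn Hy) as [z [Hz Hle2]]. unfold AA in Hle2.
  eapply Rle_trans. apply Hle2.
  assert (Hr1 : rho <> 1) by lra.
  destruct (rsum_two n rho z psi Hr1 Hz) as [E1 Hk].
  destruct (rsum_two n rho z (fun x => x) Hr1 Hz) as [E2 _].
  cbv beta in E2. change (rsum n z) with (rsum n (fun i => z i)). rewrite E1, E2, Rmult_1_r. rewrite Hg by auto. fold (GG n (cnt rho n z)).
  apply (proj1 (mx_spec (GG n) n)). auto.
Qed.

Lemma MM_max n : (1 <= n)%nat -> is_max_over_P n rho (F n) (MM n).
Proof.
  intros Hn. split.
  - destruct (proj2 (mx_spec (GG n) n)) as [k [Hk E]]. exists (twoQ n k). split.
    apply twoQ_in; auto. unfold MM. rewrite E. apply F_twoQ; auto.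
  - intros Q HQ. apply F_le; auto.
Qed.

Lemma MM_le n : (1 <= n)%nat -> MM n <= Delta.
Proof.
  intros Hn. destruct (proj2 (mx_spec (GG n) n)) as [k [Hk E]]. unfold MM. rewrite E.
  unfold GG. apply Hle. assert (0 < INR n) by (apply lt_0_INR; lia).
  assert (INR k <= INR n) by (apply le_INR; auto). split.
  apply Rdiv_le_0_compat; auto using pos_INR. apply (Rmult_le_reg_r (INR n)); auto.
  unfold Rdiv; rewrite Rmult_assoc, Rinv_l; lra.
Qed.

Lemma MM_cv : Un_cv MM Delta.
Proof.
  intros eps He.
  destruct (Hcont eps He) as [d [Hd Hdd]].
  destruct (archimed_cor1 d Hd) as [N [HN HN0]].
  exists N. intros n Hn.
  assert (Hn1 : (1 <= n)%nat) by lia.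
  assert (Pn : 0 < INR n) by (apply lt_0_INR; lia).
  assert (PN : 0 < INR N) by (apply lt_0_INR; lia).
  assert (INR N <= INR n) by (apply le_INR; lia).
  destruct (floor_ex (INR n * bs) n) as [k [Hk Hk2]]. nra. nra.
  assert (Hx : Rabs (INR k / INR n - bs) < d).
  { assert (/ INR n <= / INR N) by (apply Rinv_le_contravar; auto).
    assert (EE : INR k / INR n - bs = (INR k - INR n * bs) / INR n) by (field; lra).
    rewrite EE. unfold Rdiv. rewrite Rabs_mult, Rabs_inv, (Rabs_pos_eq (INR n)) by lra.
    assert (Rabs (INR k - INR n * bs) <= 1) by (apply Rabs_le; lra).
    assert (0 < / INR n) by (apply Rinv_0_lt_compat; auto).
    nra. }
  assert (Hgk : Rabs (g (INR k / INR n) - Delta) < eps).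
  { destruct (Req_dec (INR k / INR n) bs) as [Q|Q].
    - rewrite Q, Hgbs. rewrite Rminus_diag, Rabs_R0; auto.
    - rewrite <- Hgbs. apply (Hdd (INR k / INR n)). split. split; auto. exact I. exact Hx. }
  assert (GG n k <= MM n) by (apply (proj1 (mx_spec (GG n) n)); auto).
  pose proof (MM_le n Hn1). unfold GG in *. unfold R_dist.
  apply Rabs_def2 in Hgk. apply Rabs_def1; lra.
Qed.

End Generic.

Lemma RP_pos x a : 0 < Rpower x a.
Proof. unfold Rpower; apply exp_pos. Qed.
Lemma RP_mul x y a : 0 < x -> 0 < y -> Rpower (x*y) a = Rpower x a * Rpower y a.
Proof. intros; symmetry; apply Rpower_mult_distr; auto. Qed.
Lemma RP_inv x a : 0 < x -> Rpower (/x) a = Rpower x (-a).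
Proof. intros; unfold Rpower. rewrite ln_Rinv by auto. f_equal; ring. Qed.
Lemma RP_plus x a b : Rpower x (a+b) = Rpower x a * Rpower x b.
Proof. apply Rpower_plus. Qed.
Lemma RP_one a : Rpower 1 a = 1.
Proof. unfold Rpower. rewrite ln_1, Rmult_0_r, exp_0. auto. Qed.
Lemma RP_1 x : 0 < x -> Rpower x 1 = x.
Proof. apply Rpower_1. Qed.
Lemma RP_m1 x : 0 < x -> Rpower x (-1) = / x.
Proof. intros. unfold Rpower. replace (-1 * ln x) with (- ln x) by ring. rewrite exp_Ropp, exp_ln; auto. Qed.
Lemma RP_div x y a : 0 < x -> 0 < y -> Rpower (x/y) a = Rpower x a / Rpower y a.
Proof.
  intros. unfold Rdiv. rewrite RP_mul, RP_inv; auto. 2: apply Rinv_0_lt_compat; auto.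
  f_equal. unfold Rpower. rewrite <- exp_Ropp. f_equal; ring.
Qed.

Lemma exp_sign z : 0 <= (exp z - 1) * z.
Proof.
  destruct (Rle_dec 0 z).
  - assert (1 <= exp z) by (rewrite <- exp_0; destruct r; [left; apply exp_increasing; auto|subst; lra]).
    nra.
  - assert (exp z < 1) by (rewrite <- exp_0; apply exp_increasing; lra). nra.
Qed.

Lemma ln_pos_gt x : 1 < x -> 0 < ln x.
Proof. intros; rewrite <- ln_1; apply ln_increasing; lra. Qed.
Lemma ln_neg_lt x : 0 < x -> x < 1 -> ln x < 0.
Proof. intros; rewrite <- ln_1; apply ln_increasing; lra. Qed.

Lemma bern x a : 0 < x -> 0 <= a * (a - 1) * (Rpower x a - 1 - a * (x - 1)).
Proof.
  intros Hx.
  set (f := fun x => exp (a * ln x) - 1 - a * (x - 1)).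
  set (df := fun c => a * (exp ((a - 1) * ln c) - 1)).
  assert (Hd : forall c, 0 < c -> derivable_pt_lim f c (df c)).
  { intros c Hc. apply is_derive_Reals. unfold f, df. auto_derive. auto.
    replace ((a - 1) * ln c) with (a * ln c + - ln c) by ring.
    rewrite exp_plus, exp_Ropp, exp_ln by auto. field. lra. }
  assert (f1 : f 1 = 0) by (unfold f; rewrite ln_1, Rmult_0_r, exp_0; ring).
  change (Rpower x a - 1 - a * (x - 1)) with (f x).
  destruct (Rtotal_order x 1) as [H|[H|H]].
  - destruct (MVT_cor2 f df x 1 H) as [c [E Hc]]. intros; apply Hd; lra.
    rewrite f1 in E. assert (f x = - (df c * (1 - x))) by lra. rewrite H0. unfold df.
    pose proof (exp_sign ((a - 1) * ln c)). pose proof (ln_neg_lt c ltac:(lra) ltac:(lra)).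
    assert (0 <= (a - 1) * (exp ((a - 1) * ln c) - 1) * - 1).
    { apply (Rmult_le_reg_r (- ln c)). lra. rewrite Rmult_0_l. nra. }
    assert (0 <= a * a) by nra.
    assert (0 <= (a * a) * ((a - 1) * (exp ((a - 1) * ln c) - 1) * - 1) * (1 - x)).
    { apply Rmult_le_pos; [apply Rmult_le_pos|]; lra. }
    replace (a * (a - 1) * - (a * (exp ((a - 1) * ln c) - 1) * (1 - x)))
      with ((a * a) * ((a - 1) * (exp ((a - 1) * ln c) - 1) * - 1) * (1 - x)) by ring. auto.
  - subst. rewrite f1. lra.
  - destruct (MVT_cor2 f df 1 x H) as [c [E Hc]]. intros; apply Hd; lra.
    rewrite f1 in E. assert (f x = df c * (x - 1)) by lra. rewrite H0. unfold df.
    pose proof (exp_sign ((a - 1) * ln c)). pose proof (ln_pos_gt c ltac:(lra)).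
    assert (0 <= (a - 1) * (exp ((a - 1) * ln c) - 1)).
    { apply (Rmult_le_reg_r (ln c)). lra. rewrite Rmult_0_l. nra. }
    assert (0 <= a * a) by nra.
    assert (0 <= (a * a) * ((a - 1) * (exp ((a - 1) * ln c) - 1)) * (x - 1)).
    { apply Rmult_le_pos; [apply Rmult_le_pos|]; lra. }
    replace (a * (a - 1) * (a * (exp ((a - 1) * ln c) - 1) * (x - 1)))
      with ((a * a) * ((a - 1) * (exp ((a - 1) * ln c) - 1)) * (x - 1)) by ring. auto.
Qed.

Lemma ln_le_m1 x : 0 < x -> ln x <= x - 1.
Proof. intros. pose proof (exp_ineq1_le (ln x)). rewrite exp_ln in H0; lra. Qed.

Lemma exp_le_mono a b : a <= b -> exp a <= exp b.
Proof. intros [h|h]. left; apply exp_increasing; auto. subst; lra. Qed.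

Lemma mono_pow x y c : 0 < x -> x <= y -> 0 <= (Rpower y c - Rpower x c) * c.
Proof.
  intros Hx Hxy. unfold Rpower. assert (ln x <= ln y) by (apply ln_le; auto).
  destruct (Rle_dec 0 c).
  - assert (exp (c * ln x) <= exp (c * ln y)) by (apply exp_le_mono; nra). nra.
  - assert (exp (c * ln y) <= exp (c * ln x)) by (apply exp_le_mono; nra). nra.
Qed.

Lemma div_pos_same X Y : (0 < X /\ 0 < Y) \/ (X < 0 /\ Y < 0) -> 0 < X / Y.
Proof.
  intros [[a b]|[a b]]; unfold Rdiv.
  - apply Rmult_lt_0_compat; auto. apply Rinv_0_lt_compat; auto.
  - assert (/ Y < 0) by (apply Rinv_lt_0_compat; auto). nra.
Qed.

Section Gen.
Variables (al rho : R).
Hypothesis H0 : al <> 0.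
Hypothesis H1 : al <> 1.
Hypothesis Hrho : 1 < rho.

Definition AG := Rpower rho al - 1.
Definition BG := rho - 1.
Definition K1 := AG / (al * BG).
Definition K2 := (BG - AG) / (BG * (1 - al)).
Definition hst := Rpower K1 al * Rpower K2 (1 - al).
Definition psiG (y : R) := Rpower y al.
Definition PsiG (n : nat) (A S : R) := (Rpower (INR n) (al - 1) * A * Rpower S (- al) - 1) / (al * (al - 1)).
Definition gG (b : R) := ((1 + b * AG) * Rpower (1 + b * BG) (- al) - 1) / (al * (al - 1)).
Definition bsG := (K2 / K1 - 1) / BG.

Lemma u_gen t : u_alpha al t = (Rpower t al - al * (t - 1) - 1) / (al * (al - 1)).
Proof.
  unfold u_alpha. destruct (Req_EM_T al 1); [contradiction|]. destruct (Req_EM_T al 0); [contradiction|]. auto.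
Qed.

Lemma aa_ne : al * (al - 1) <> 0.
Proof. intro h. apply Rmult_integral in h. destruct h; [contradiction|apply H1; lra]. Qed.

Lemma BG_pos : 0 < BG. Proof. unfold BG; lra. Qed.

Lemma Aal_pos : 0 < AG / al.
Proof.
  apply div_pos_same. unfold AG, Rpower. pose proof (ln_pos_gt rho Hrho).
  destruct (Rtotal_order al 0) as [h|[h|h]]; [|contradiction|].
  - right. assert (exp (al * ln rho) < 1) by (rewrite <- exp_0; apply exp_increasing; nra). lra.
  - left. assert (1 < exp (al * ln rho)) by (rewrite <- exp_0; apply exp_increasing; nra). lra.
Qed.

Lemma BA_pos : 0 < (BG - AG) / (1 - al).
Proof.
  apply div_pos_same. unfold AG, BG, Rpower. pose proof (ln_pos_gt rho Hrho).
  assert (Er : exp (ln rho) = rho) by (apply exp_ln; lra).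
  destruct (Rtotal_order al 1) as [h|[h|h]]; [|contradiction|].
  - left. assert (exp (al * ln rho) < exp (ln rho)) by (apply exp_increasing; nra). lra.
  - right. assert (exp (al * ln rho) > exp (ln rho)) by (apply exp_increasing; nra). lra.
Qed.

Lemma K1_pos : 0 < K1.
Proof.
  unfold K1. replace (AG / (al * BG)) with ((AG / al) / BG) by (field; pose proof BG_pos; lra).
  apply Rdiv_lt_0_compat. apply Aal_pos. apply BG_pos.
Qed.

Lemma K2_pos : 0 < K2.
Proof.
  unfold K2. replace ((BG - AG) / (BG * (1 - al))) with (((BG - AG) / (1 - al)) / BG)
    by (pose proof BG_pos; assert (1 - al <> 0) by (intro; apply H1; lra); field; split; lra).
  apply Rdiv_lt_0_compat. apply BA_pos. apply BG_pos.
Qed.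

Lemma hst_eq : hst = Rpower (AG / al) al * Rpower ((BG - AG) / (1 - al)) (1 - al) / BG.
Proof.
  unfold hst. pose proof BG_pos. pose proof Aal_pos. pose proof BA_pos.
  assert (1 - al <> 0) by (intro; apply H1; lra).
  assert (E1 : K1 = (AG / al) / BG) by (unfold K1; field; lra).
  assert (E2 : K2 = ((BG - AG) / (1 - al)) / BG) by (unfold K2; field; lra).
  rewrite E1, E2. rewrite (RP_div (AG/al) BG al) by auto.
  rewrite (RP_div ((BG-AG)/(1-al)) BG (1-al)) by auto.
  assert (E3 : Rpower BG al * Rpower BG (1 - al) = BG).
  { rewrite <- RP_plus. replace (al + (1 - al)) with 1 by ring. apply RP_1; auto. }
  pose proof (RP_pos BG al). pose proof (RP_pos BG (1 - al)).
  set (p := Rpower BG al) in *. set (q := Rpower BG (1 - al)) in *.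
  rewrite <- E3. field. lra.
Qed.

Lemma Delta_gen : DeltaAlpha al rho = (hst - 1) / (al * (al - 1)).
Proof.
  unfold DeltaAlpha. destruct (Req_EM_T al 1); [contradiction|]. destruct (Req_EM_T al 0); [contradiction|].
  rewrite hst_eq. unfold AG, BG. replace (rho - 1 - (Rpower rho al - 1)) with (rho - Rpower rho al) by ring.
  unfold Rdiv at 4. ring.
Qed.

Lemma al_ne1 : al - 1 <> 0. Proof. intro; apply H1; lra. Qed.

Lemma RP_n n : (1 <= n)%nat -> Rpower (INR n) al = INR n * Rpower (INR n) (al - 1).
Proof.
  intros. assert (0 < INR n) by (apply lt_0_INR; lia).
  replace al with (1 + (al - 1)) at 1 by ring. rewrite RP_plus, RP_1; auto.
Qed.

Lemma Hcl_gen n y : (1 <= n)%nat -> (forall i, (i < n)%nat -> 0 < y i) ->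
  alphaDiv n al (fun i => y i / rsum n y) (fun _ => unif n) = PsiG n (rsum n (fun i => psiG (y i))) (rsum n y).
Proof.
  intros Hn Hy. unfold alphaDiv, unif.
  assert (HS : 0 < rsum n y) by (apply rsum_pos; auto; lia).
  set (S := rsum n y) in *.
  assert (Np : 0 < INR n) by (apply lt_0_INR; lia).
  pose proof al_ne1.
  rewrite (rsum_ext n _ (fun i => (Rpower (INR n) (al-1) * Rpower S (-al) / (al*(al-1))) * Rpower (y i) al
        + (- / (S*(al-1))) * y i + / (INR n * al))).
  - rewrite rsum_lin. unfold PsiG, psiG. fold S. field. repeat split; lra || auto.
  - intros i Hi. rewrite u_gen. specialize (Hy i Hi).
    replace (y i / S / / INR n) with (INR n * (y i * / S)) by (field; lra).
    rewrite RP_mul, RP_mul, RP_inv; auto. 2: apply Rinv_0_lt_compat; auto. 2: apply Rmult_lt_0_compat; auto; apply Rinv_0_lt_compat; auto.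
    rewrite RP_n by auto. field. repeat split; lra || auto.
Qed.

Lemma H1D_gen n C D : (1 <= n)%nat -> 0 <= D -> forall t, 1 <= t <= rho ->
  PsiG n (psiG t + C) (t + D) <= Rmax (PsiG n (psiG 1 + C) (1 + D)) (PsiG n (psiG rho + C) (rho + D)).
Proof.
  intros Hn HD.
  assert (Np : 0 < INR n) by (apply lt_0_INR; lia).
  pose proof al_ne1.
  apply (qconv2 (fun t => PsiG n (psiG t + C) (t + D))
     (fun t => (Rpower (INR n) (al-1) * Rpower (t+D) (-al) / (t + D)) * ((D * Rpower t (al-1) - C)/(al-1)))
     (fun t => Rpower (INR n) (al-1) * Rpower (t+D) (-al) / (t + D))
     (fun t => (D * Rpower t (al-1) - C)/(al-1))); auto.
  - intros x Hx. apply is_derive_Reals. unfold PsiG, psiG, Rpower. auto_derive.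
    repeat split; lra.
    replace ((al - 1) * ln x) with (al * ln x + - ln x) by ring.
    rewrite exp_plus, exp_Ropp, exp_ln by lra.
    field. repeat split; lra || auto.
  - intros x Hx. split; auto. apply Rdiv_lt_0_compat. apply Rmult_lt_0_compat; apply RP_pos. lra.
  - intros x y Hx Hy. pose proof (mono_pow x y (al - 1) ltac:(lra) ltac:(lra)).
    assert (0 <= (D * Rpower y (al - 1) - C) / (al - 1) - (D * Rpower x (al - 1) - C) / (al - 1)).
    { replace ((D * Rpower y (al - 1) - C) / (al - 1) - (D * Rpower x (al - 1) - C) / (al - 1))
        with (D * ((Rpower y (al - 1) - Rpower x (al - 1)) * (al - 1)) / ((al - 1) * (al - 1))) by (field; auto).
      apply Rdiv_le_0_compat. apply Rmult_le_pos; auto.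
      assert (0 <> (al - 1) * (al - 1)) by (intro h; symmetry in h; apply Rmult_integral in h; tauto).
      assert (0 <= (al - 1) * (al - 1)) by nra. lra. }
    lra.
Qed.

Lemma RP_0 x : Rpower x 0 = 1.
Proof. unfold Rpower. rewrite Rmult_0_l, exp_0. auto. Qed.

Lemma Hg_gen n k : (1 <= n)%nat -> (k <= n)%nat ->
  PsiG n (INR k * psiG rho + (INR n - INR k) * psiG 1) (INR k * rho + (INR n - INR k)) = gG (INR k / INR n).
Proof.
  intros Hn Hk.
  assert (Np : 0 < INR n) by (apply lt_0_INR; lia).
  assert (Hb : 0 <= INR k / INR n) by (apply Rdiv_le_0_compat; auto using pos_INR).
  pose proof BG_pos.
  unfold psiG. rewrite RP_one.
  replace (INR k * rho + (INR n - INR k)) with (INR n * (1 + INR k / INR n * BG)) by (unfold BG; field; lra).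
  replace (INR k * Rpower rho al + (INR n - INR k) * 1) with (INR n * (1 + INR k / INR n * AG)) by (unfold AG; field; lra).
  unfold PsiG, gG. rewrite RP_mul; auto. 2: nra.
  assert (E : Rpower (INR n) (al - 1) * INR n * Rpower (INR n) (- al) = 1).
  { rewrite (Rmult_comm (Rpower (INR n) (al-1)) (INR n)), <- RP_n by auto.
    rewrite <- RP_plus. replace (al + - al) with 0 by ring. apply RP_0. }
  set (X := 1 + INR k / INR n * AG). set (Y := Rpower (1 + INR k / INR n * BG) (- al)).
  replace (Rpower (INR n) (al - 1) * (INR n * X) * (Rpower (INR n) (- al) * Y))
    with ((Rpower (INR n) (al - 1) * INR n * Rpower (INR n) (- al)) * (X * Y)) by ring.
  rewrite E. f_equal. ring.
Qed.

Lemma young p q : 0 < p -> 0 < q ->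
  0 <= al * (al - 1) * (Rpower p al * Rpower q (1 - al) - (al * p + (1 - al) * q)).
Proof.
  intros Hp Hq. pose proof (bern (p / q) al ltac:(apply Rdiv_lt_0_compat; auto)) as Hb.
  rewrite RP_div in Hb by auto.
  assert (E : Rpower q al * Rpower q (1 - al) = q).
  { rewrite <- RP_plus. replace (al + (1 - al)) with 1 by ring. apply RP_1; auto. }
  pose proof (RP_pos q al). pose proof (RP_pos q (1 - al)). pose proof (RP_pos p al).
  set (a := Rpower q al) in *. set (b := Rpower q (1 - al)) in *. set (c := Rpower p al) in *.
  assert (Hq2 : c * b - (al * p + (1 - al) * q) = q * (c / a - 1 - al * (p / q - 1))).
  { rewrite <- E. field. lra. }
  rewrite Hq2. replace (al * (al - 1) * (q * (c / a - 1 - al * (p / q - 1))))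
    with (q * (al * (al - 1) * (c / a - 1 - al * (p / q - 1)))) by ring.
  apply Rmult_le_pos; lra.
Qed.

Lemma ident b : al * ((1 + b * BG) * K1) + (1 - al) * K2 = 1 + b * AG.
Proof.
  pose proof BG_pos. assert (1 - al <> 0) by (intro; apply H1; lra).
  unfold K1, K2. field. repeat split; auto; lra.
Qed.

Lemma key b : 0 <= b -> 0 <= al * (al - 1) * (hst - (1 + b * AG) * Rpower (1 + b * BG) (- al)).
Proof.
  intros Hb. pose proof BG_pos. pose proof K1_pos. pose proof K2_pos.
  assert (Hs : 0 < 1 + b * BG) by nra.
  pose proof (young ((1 + b * BG) * K1) K2 ltac:(nra) ltac:(auto)) as Y.
  rewrite ident in Y. rewrite RP_mul in Y by auto.
  set (s := 1 + b * BG) in *.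
  assert (E : Rpower s al * Rpower s (- al) = 1).
  { rewrite <- RP_plus. replace (al + - al) with 0 by ring. apply RP_0. }
  pose proof (RP_pos s (- al)).
  unfold hst.
  set (u := Rpower s al) in *. set (w := Rpower s (- al)) in *.
  set (KK := Rpower K1 al * Rpower K2 (1 - al)).
  replace (u * Rpower K1 al * Rpower K2 (1 - al)) with (u * KK) in Y by (unfold KK; ring).
  assert (EQ : al * (al - 1) * (KK - (1 + b * AG) * w) = w * (al * (al - 1) * (u * KK - (1 + b * AG)))).
  { transitivity (al * (al - 1) * ((u * w) * KK - (1 + b * AG) * w)). rewrite E; ring. ring. }
  rewrite EQ. apply Rmult_le_pos; lra.
Qed.

Lemma Hle_gen b : 0 <= b <= 1 -> gG b <= DeltaAlpha al rho.
Proof.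
  intros Hb. rewrite Delta_gen. unfold gG. pose proof (key b ltac:(lra)) as K.
  set (h := (1 + b * AG) * Rpower (1 + b * BG) (- al)) in *.
  destruct (Rtotal_order (al * (al - 1)) 0) as [N|[N|N]].
  - assert (hst - h <= 0) by nra.
    assert (/ (al * (al - 1)) < 0) by (apply Rinv_lt_0_compat; auto).
    assert (0 <= (h - hst) * - / (al * (al - 1))) by (apply Rmult_le_pos; lra).
    unfold Rdiv. nra.
  - exfalso; apply aa_ne; auto.
  - assert (0 <= hst - h) by nra. unfold Rdiv. apply Rmult_le_compat_r. left; apply Rinv_0_lt_compat; auto. lra.
Qed.

Lemma K_order : K1 <= K2 <= rho * K1.
Proof.
  pose proof BG_pos. pose proof K1_pos. pose proof K2_pos. pose proof aa_ne. pose proof al_ne1.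
  assert (1 - al <> 0) by (intro; apply H1; lra).
  pose proof (bern rho al ltac:(lra)) as B1.
  pose proof (bern rho (1 - al) ltac:(lra)) as B2.
  assert (Exy : Rpower rho al * Rpower rho (1 - al) = rho).
  { rewrite <- RP_plus. replace (al + (1 - al)) with 1 by ring. apply RP_1; lra. }
  pose proof (RP_pos rho al) as Px.
  unfold K1, K2, AG, BG in *.
  set (x := Rpower rho al) in *. set (y := Rpower rho (1 - al)) in *.
  assert (aa2 : 0 < (al * (al - 1)) * (al * (al - 1))) by (destruct (Rtotal_order (al*(al-1)) 0) as [h|[h|h]]; [nra|contradiction|nra]).
  split.
  - assert (E : (rho - 1 - (x - 1)) / ((rho - 1) * (1 - al)) - (x - 1) / (al * (rho - 1))
        = (al * (al - 1) * (x - 1 - al * (rho - 1))) / ((al * (al - 1)) * (al * (al - 1)) * (rho - 1))).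
    { field. repeat split; auto; lra. }
    assert (0 <= (al * (al - 1) * (x - 1 - al * (rho - 1))) / ((al * (al - 1)) * (al * (al - 1)) * (rho - 1))).
    { apply Rdiv_le_0_compat; auto. apply Rmult_lt_0_compat; lra. }
    lra.
  - replace (1 - al - 1) with (- al) in B2 by ring.
    assert (E : rho * ((x - 1) / (al * (rho - 1))) - (rho - 1 - (x - 1)) / ((rho - 1) * (1 - al))
        = x * ((1 - al) * - al * (y - 1 - (1 - al) * (rho - 1))) / ((al * (al - 1)) * (al * (al - 1)) * (rho - 1))).
    { assert (NI : rho * (x - 1) * (1 - al) - al * (rho - x) = - x * (y - 1 - (1 - al) * (rho - 1)))
        by (rewrite <- Exy; ring).
      transitivity ((rho * (x - 1) * (1 - al) - al * (rho - x)) / (al * (1 - al) * (rho - 1))).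
      field. repeat split; auto; lra.
      rewrite NI. field. repeat split; auto; lra. }
    assert (0 <= x * ((1 - al) * - al * (y - 1 - (1 - al) * (rho - 1))) / ((al * (al - 1)) * (al * (al - 1)) * (rho - 1))).
    { apply Rdiv_le_0_compat. apply Rmult_le_pos; lra. apply Rmult_lt_0_compat; lra. }
    lra.
Qed.

Lemma bsG_range : 0 <= bsG <= 1.
Proof.
  pose proof K_order. pose proof K1_pos. pose proof BG_pos. unfold bsG.
  assert (1 <= K2 / K1 <= rho).
  { split. apply (Rmult_le_reg_r K1); auto. unfold Rdiv; rewrite Rmult_assoc, Rinv_l; lra.
    apply (Rmult_le_reg_r K1); auto. unfold Rdiv; rewrite Rmult_assoc, Rinv_l; lra. }
  split. apply Rdiv_le_0_compat; lra.
  apply (Rmult_le_reg_r BG); auto. unfold Rdiv; rewrite Rmult_assoc, Rinv_l; unfold BG in *; lra.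
Qed.

Lemma gG_bs : gG bsG = DeltaAlpha al rho.
Proof.
  pose proof K1_pos. pose proof K2_pos. pose proof BG_pos.
  rewrite Delta_gen. unfold gG.
  assert (Es : 1 + bsG * BG = K2 / K1) by (unfold bsG; field; lra).
  assert (Ea : 1 + bsG * AG = K2).
  { rewrite <- ident. rewrite Es. field. lra. }
  rewrite Es, Ea. f_equal. f_equal. unfold hst.
  rewrite RP_div by auto.
  assert (E1 : Rpower K1 al * Rpower K1 (- al) = 1).
  { rewrite <- RP_plus. replace (al + - al) with 0 by ring. apply RP_0. }
  assert (E2 : K2 * Rpower K2 (- al) = Rpower K2 (1 - al)).
  { rewrite <- (RP_1 K2) at 1 by auto. rewrite <- RP_plus. f_equal; ring. }
  pose proof (RP_pos K1 (- al)). pose proof (RP_pos K1 al).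
  rewrite <- E2. set (a := Rpower K1 al) in *. set (b := Rpower K1 (- al)) in *.
  assert (Eb : b = / a) by (apply (Rmult_eq_reg_l a); [rewrite E1; field|]; lra).
  rewrite Eb. field. lra.
Qed.

Lemma gG_cont : continuity_pt gG bsG.
Proof.
  pose proof bsG_range. pose proof BG_pos.
  assert (HC : continuous gG bsG).
  { apply (ex_derive_continuous (K := R_AbsRing) (V := R_NormedModule)).
    unfold gG, Rpower. auto_derive. nra. }
  apply continuity_pt_filterlim. exact HC.
Qed.
End Gen.

Lemma Fext_alpha al n Q Q' : (forall i, (i < n)%nat -> Q i = Q' i) ->
  alphaDiv n al Q (fun _ => unif n) = alphaDiv n al Q' (fun _ => unif n).
Proof. intros H. unfold alphaDiv. apply rsum_ext. intros i Hi. rewrite H; auto. Qed.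

Lemma assemble (rho al : R) (psi : R -> R) (Psi : nat -> R -> R -> R) (g : R -> R) (Delta bs : R) :
  1 < rho ->
  (forall n y, (1 <= n)%nat -> (forall i, (i < n)%nat -> 0 < y i) ->
    alphaDiv n al (fun i => y i / rsum n y) (fun _ => unif n) = Psi n (rsum n (fun i => psi (y i))) (rsum n y)) ->
  (forall n C D, (1 <= n)%nat -> 0 <= D -> forall t, 1 <= t <= rho ->
    Psi n (psi t + C) (t + D) <= Rmax (Psi n (psi 1 + C) (1 + D)) (Psi n (psi rho + C) (rho + D))) ->
  (forall n k, (1 <= n)%nat -> (k <= n)%nat ->
    Psi n (INR k * psi rho + (INR n - INR k) * psi 1) (INR k * rho + (INR n - INR k)) = g (INR k / INR n)) ->
  (forall b, 0 <= b <= 1 -> g b <= Delta) ->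
  0 <= bs <= 1 -> g bs = Delta -> continuity_pt g bs ->
  exists M : nat -> R,
    (forall n, (1 <= n)%nat -> is_max_over_P n rho (fun Q => alphaDiv n al Q (fun _ => unif n)) (M n)) /\
    Un_cv M Delta /\ (forall n, (1 <= n)%nat -> M n <= Delta).
Proof.
  intros Hr Hcl H1D Hg Hle Hbs Hgbs Hc. exists (MM g). split; [|split].
  - intros n Hn. apply (MM_max rho (fun n Q => alphaDiv n al Q (fun _ => unif n)) psi Psi g Delta bs); auto.
    intros; apply Fext_alpha; auto.
  - apply (MM_cv g Delta bs); auto.
  - intros; apply MM_le; auto.
Qed.

Lemma gen_main al rho : al <> 0 -> al <> 1 -> 1 < rho ->
  exists M : nat -> R,
    (forall n, (1 <= n)%nat -> is_max_over_P n rho (fun Q => alphaDiv n al Q (fun _ => unif n)) (M n)) /\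
    Un_cv M (DeltaAlpha al rho) /\ (forall n, (1 <= n)%nat -> M n <= DeltaAlpha al rho).
Proof.
  intros H0 H1 Hr.
  apply (assemble rho al (psiG al) (PsiG al) (gG al rho) (DeltaAlpha al rho) (bsG al rho)); auto.
  - intros; apply Hcl_gen; auto.
  - intros; apply H1D_gen; auto.
  - intros; apply Hg_gen; auto.
  - intros; apply Hle_gen; auto.
  - apply bsG_range; auto.
  - apply gG_bs; auto.
  - apply gG_cont; auto.
Qed.

Section One.
Variable rho : R.
Hypothesis Hrho : 1 < rho.

Definition L1 := ln rho.
Definition B1 := rho - 1.
Definition KK := rho * L1 / B1.
Definition psi1 (y : R) := y * ln y.
Definition Psi1 (n : nat) (A S : R) := ln (INR n) - ln S + A / S.
Definition g1 (b : R) := - ln (1 + b * B1) + b * rho * L1 / (1 + b * B1).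
Definition bs1 := (KK - 1) / B1.

Lemma L1_pos : 0 < L1. Proof. apply ln_pos_gt; auto. Qed.
Lemma B1_pos : 0 < B1. Proof. unfold B1; lra. Qed.

Lemma KK_range : 1 <= KK <= rho.
Proof.
  pose proof L1_pos. pose proof B1_pos. unfold KK.
  pose proof (ln_le_m1 rho ltac:(lra)). pose proof (ln_le_m1 (/ rho) ltac:(apply Rinv_0_lt_compat; lra)).
  rewrite ln_Rinv in H2 by lra. fold L1 in H1, H2. unfold B1 in *.
  assert (rho * / rho = 1) by (field; lra).
  split.
  - apply (Rmult_le_reg_r (rho - 1)); auto. unfold Rdiv. rewrite Rmult_assoc, Rinv_l by lra. nra.
  - apply (Rmult_le_reg_r (rho - 1)); auto. unfold Rdiv. rewrite Rmult_assoc, Rinv_l by lra. nra.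
Qed.

Lemma Delta1 : DeltaAlpha 1 rho = KK - 1 - ln KK.
Proof.
  unfold DeltaAlpha. destruct (Req_EM_T 1 1); [|congruence].
  pose proof KK_range. 
  replace (exp 1 * rho * ln rho / (rho - 1)) with (exp 1 * KK) by (unfold KK, L1, B1; field; lra).
  rewrite ln_mult, ln_exp by (try apply exp_pos; lra). unfold KK, L1, B1. ring.
Qed.

Lemma Hcl1 n y : (1 <= n)%nat -> (forall i, (i < n)%nat -> 0 < y i) ->
  alphaDiv n 1 (fun i => y i / rsum n y) (fun _ => unif n) = Psi1 n (rsum n (fun i => psi1 (y i))) (rsum n y).
Proof.
  intros Hn Hy. unfold alphaDiv, unif.
  assert (HS : 0 < rsum n y) by (apply rsum_pos; auto; lia).
  set (S := rsum n y) in *.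
  assert (Np : 0 < INR n) by (apply lt_0_INR; lia).
  rewrite (rsum_ext n _ (fun i => (/ S) * psi1 (y i) + ((ln (INR n) - ln S) / S - / S) * y i + / INR n)).
  - rewrite rsum_lin. unfold Psi1. fold S. field. lra.
  - intros i Hi. unfold u_alpha. destruct (Req_EM_T 1 1); [|congruence]. specialize (Hy i Hi).
    replace (y i / S / / INR n) with (INR n * (y i * / S)) by (field; lra).
    rewrite !ln_mult, ln_Rinv; try lra; try apply Rinv_0_lt_compat; try lra.
    2: apply Rmult_lt_0_compat; auto; apply Rinv_0_lt_compat; auto.
    unfold psi1. field. lra.
Qed.

Lemma H1D1 n C D : (1 <= n)%nat -> 0 <= D -> forall t, 1 <= t <= rho ->
  Psi1 n (psi1 t + C) (t + D) <= Rmax (Psi1 n (psi1 1 + C) (1 + D)) (Psi1 n (psi1 rho + C) (rho + D)).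
Proof.
  intros Hn HD.
  apply (qconv2 (fun t => Psi1 n (psi1 t + C) (t + D))
     (fun t => (/ ((t + D) * (t + D))) * (D * ln t - C))
     (fun t => / ((t + D) * (t + D)))
     (fun t => D * ln t - C)); auto.
  - intros x Hx. apply is_derive_Reals. unfold Psi1, psi1. auto_derive.
    repeat split; lra. field. lra.
  - intros x Hx. split; auto. apply Rinv_0_lt_compat. nra.
  - intros x y Hx Hy. cbv beta. assert (ln x <= ln y) by (apply ln_le; lra). apply Rplus_le_compat_r, Rmult_le_compat_l; auto.
Qed.

Lemma Hg1 n k : (1 <= n)%nat -> (k <= n)%nat ->
  Psi1 n (INR k * psi1 rho + (INR n - INR k) * psi1 1) (INR k * rho + (INR n - INR k)) = g1 (INR k / INR n).
Proof.
  intros Hn Hk.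
  assert (Np : 0 < INR n) by (apply lt_0_INR; lia).
  assert (Hb : 0 <= INR k / INR n) by (apply Rdiv_le_0_compat; auto using pos_INR).
  pose proof B1_pos.
  unfold psi1. rewrite ln_1.
  replace (INR k * rho + (INR n - INR k)) with (INR n * (1 + INR k / INR n * B1)) by (unfold B1; field; lra).
  assert (0 < 1 + INR k / INR n * B1) by nra.
  pose proof (pos_INR k). unfold Psi1, g1. rewrite ln_mult by lra. unfold L1. field. split; nra.
Qed.

Lemma Hle1 b : 0 <= b <= 1 -> g1 b <= DeltaAlpha 1 rho.
Proof.
  intros Hb. rewrite Delta1. pose proof B1_pos. pose proof KK_range.
  assert (Hs : 0 < 1 + b * B1) by nra.
  assert (E : g1 b = - ln (1 + b * B1) + KK - KK / (1 + b * B1)) by (unfold g1, KK; field; lra).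
  set (s := 1 + b * B1) in *.
  rewrite E. pose proof (ln_le_m1 (KK / s) ltac:(apply Rdiv_lt_0_compat; lra)).
  rewrite ln_div in H1 by lra. lra.
Qed.

Lemma bs1_range : 0 <= bs1 <= 1.
Proof.
  pose proof KK_range. pose proof B1_pos. unfold bs1. split. apply Rdiv_le_0_compat; lra.
  apply (Rmult_le_reg_r B1); auto. unfold Rdiv; rewrite Rmult_assoc, Rinv_l by lra. unfold B1 in *; lra.
Qed.

Lemma g1_bs : g1 bs1 = DeltaAlpha 1 rho.
Proof.
  rewrite Delta1. pose proof B1_pos. pose proof KK_range.
  assert (Es : 1 + bs1 * B1 = KK) by (unfold bs1; field; lra).
  pose proof L1_pos. unfold g1. rewrite Es. unfold bs1, KK. field. repeat split; lra.
Qed.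

Lemma g1_cont : continuity_pt g1 bs1.
Proof.
  pose proof bs1_range. pose proof B1_pos.
  assert (HC : continuous g1 bs1).
  { apply (ex_derive_continuous (K := R_AbsRing) (V := R_NormedModule)).
    unfold g1. auto_derive. split; nra. }
  apply continuity_pt_filterlim. exact HC.
Qed.

Lemma one_main :
  exists M : nat -> R,
    (forall n, (1 <= n)%nat -> is_max_over_P n rho (fun Q => alphaDiv n 1 Q (fun _ => unif n)) (M n)) /\
    Un_cv M (DeltaAlpha 1 rho) /\ (forall n, (1 <= n)%nat -> M n <= DeltaAlpha 1 rho).
Proof.
  apply (assemble rho 1 psi1 Psi1 g1 (DeltaAlpha 1 rho) bs1); auto.
  - intros; apply Hcl1; auto.
  - intros; apply H1D1; auto.
  - intros; apply Hg1; auto.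
  - intros; apply Hle1; auto.
  - apply bs1_range.
  - apply g1_bs.
  - apply g1_cont.
Qed.
End One.

Section Zero.
Variable rho : R.
Hypothesis Hrho : 1 < rho.

Definition psi0 (y : R) := ln y.
Definition Psi0 (n : nat) (A S : R) := - ln (INR n) + ln S - A / INR n.
Definition g0 (b : R) := ln (1 + b * B1 rho) - b * L1 rho.
Definition bs0 := (B1 rho / L1 rho - 1) / B1 rho.

Lemma Delta0 : DeltaAlpha 0 rho = ln (B1 rho / L1 rho) - 1 + L1 rho / B1 rho.
Proof.
  unfold DeltaAlpha. destruct (Req_EM_T 0 1); [lra|]. destruct (Req_EM_T 0 0); [|congruence].
  pose proof (KK_range rho Hrho). pose proof (L1_pos rho Hrho). pose proof (B1_pos rho).
  replace (exp 1 * rho * ln rho / (rho - 1)) with (exp 1 * (rho * (L1 rho / B1 rho))) by (unfold L1, B1; field; lra).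
  assert (0 < L1 rho / B1 rho) by (apply Rdiv_lt_0_compat; lra).
  rewrite ln_mult, ln_exp, ln_mult; try apply exp_pos; try lra; try nra.
  rewrite !ln_div by lra. fold (L1 rho). unfold B1. field. lra.
Qed.

Lemma Hcl0 n y : (1 <= n)%nat -> (forall i, (i < n)%nat -> 0 < y i) ->
  alphaDiv n 0 (fun i => y i / rsum n y) (fun _ => unif n) = Psi0 n (rsum n (fun i => psi0 (y i))) (rsum n y).
Proof.
  intros Hn Hy. unfold alphaDiv, unif.
  assert (HS : 0 < rsum n y) by (apply rsum_pos; auto; lia).
  set (S := rsum n y) in *.
  assert (Np : 0 < INR n) by (apply lt_0_INR; lia).
  rewrite (rsum_ext n _ (fun i => (- / INR n) * psi0 (y i) + 0 * y i + (ln S - ln (INR n)) / INR n)).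
  - rewrite rsum_lin. unfold Psi0. fold S. field. lra.
  - intros i Hi. unfold u_alpha. destruct (Req_EM_T 0 1); [lra|]. destruct (Req_EM_T 0 0); [|congruence].
    specialize (Hy i Hi).
    replace (y i / S / / INR n) with (INR n * (y i * / S)) by (field; lra).
    rewrite !ln_mult, ln_Rinv; try lra; try apply Rinv_0_lt_compat; try lra.
    2: apply Rmult_lt_0_compat; auto; apply Rinv_0_lt_compat; auto.
    unfold psi0. field. lra.
Qed.

Lemma H1D0 n C D : (1 <= n)%nat -> 0 <= D -> forall t, 1 <= t <= rho ->
  Psi0 n (psi0 t + C) (t + D) <= Rmax (Psi0 n (psi0 1 + C) (1 + D)) (Psi0 n (psi0 rho + C) (rho + D)).
Proof.
  intros Hn HD.
  assert (Np : 1 <= INR n) by (apply (le_INR 1); lia).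
  apply (qconv2 (fun t => Psi0 n (psi0 t + C) (t + D))
     (fun t => (/ (INR n * t * (t + D))) * ((INR n - 1) * t - D))
     (fun t => / (INR n * t * (t + D)))
     (fun t => (INR n - 1) * t - D)); auto.
  - intros x Hx. apply is_derive_Reals. unfold Psi0, psi0. auto_derive.
    repeat split; lra. field. repeat split; lra.
  - intros x Hx. split; auto. apply Rinv_0_lt_compat. apply Rmult_lt_0_compat. nra. lra.
  - intros x y Hx Hy. cbv beta. apply Rplus_le_compat_r, Rmult_le_compat_l; lra.
Qed.

Lemma Hg0 n k : (1 <= n)%nat -> (k <= n)%nat ->
  Psi0 n (INR k * psi0 rho + (INR n - INR k) * psi0 1) (INR k * rho + (INR n - INR k)) = g0 (INR k / INR n).
Proof.
  intros Hn Hk.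
  assert (Np : 0 < INR n) by (apply lt_0_INR; lia).
  assert (Hb : 0 <= INR k / INR n) by (apply Rdiv_le_0_compat; auto using pos_INR).
  pose proof (B1_pos rho).
  unfold psi0. rewrite ln_1.
  replace (INR k * rho + (INR n - INR k)) with (INR n * (1 + INR k / INR n * B1 rho)) by (unfold B1; field; lra).
  assert (0 < 1 + INR k / INR n * B1 rho) by nra.
  unfold Psi0, g0. rewrite ln_mult by lra. unfold L1. field. lra.
Qed.

Lemma Hle0 b : 0 <= b <= 1 -> g0 b <= DeltaAlpha 0 rho.
Proof.
  intros Hb. rewrite Delta0. pose proof (B1_pos rho). pose proof (L1_pos rho Hrho).
  assert (Hs : 0 < 1 + b * B1 rho) by nra.
  unfold g0.
  pose proof (ln_le_m1 ((1 + b * B1 rho) * L1 rho / B1 rho) ltac:(apply Rdiv_lt_0_compat; nra)).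
  rewrite ln_div, ln_mult in H1 by nra. rewrite ln_div by lra.
  assert ((1 + b * B1 rho) * L1 rho / B1 rho - 1 = - 1 + L1 rho / B1 rho + b * L1 rho) by (field; lra).
  lra.
Qed.

Lemma bs0_range : 0 <= bs0 <= 1.
Proof.
  pose proof (KK_range rho Hrho) as [Ha Hb']. pose proof (B1_pos rho). pose proof (L1_pos rho Hrho).
  unfold bs0, KK in *.
  assert (EE : rho * L1 rho / B1 rho * B1 rho = rho * L1 rho) by (field; lra).
  assert (F1 : B1 rho <= rho * L1 rho).
  { apply (Rmult_le_compat_r (B1 rho)) in Ha; lra. }
  assert (F2 : L1 rho <= B1 rho).
  { apply (Rmult_le_compat_r (B1 rho)) in Hb'; [|lra]. rewrite EE in Hb'. nra. }
  assert (EE2 : B1 rho / L1 rho * L1 rho = B1 rho) by (field; lra).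
  assert (1 <= B1 rho / L1 rho <= rho).
  { split; apply (Rmult_le_reg_r (L1 rho)); auto; rewrite EE2; lra. }
  split. apply Rdiv_le_0_compat; lra.
  apply (Rmult_le_reg_r (B1 rho)); auto. unfold Rdiv; rewrite Rmult_assoc, Rinv_l by lra. unfold B1 in *; lra.
Qed.

Lemma g0_bs : g0 bs0 = DeltaAlpha 0 rho.
Proof.
  rewrite Delta0. pose proof (B1_pos rho). pose proof (L1_pos rho Hrho).
  assert (Es : 1 + bs0 * B1 rho = B1 rho / L1 rho) by (unfold bs0; field; lra).
  unfold g0. rewrite Es. unfold bs0. field. lra.
Qed.

Lemma g0_cont : continuity_pt g0 bs0.
Proof.
  pose proof bs0_range. pose proof (B1_pos rho).
  assert (HC : continuous g0 bs0).
  { apply (ex_derive_continuous (K := R_AbsRing) (V := R_NormedModule)).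
    unfold g0. auto_derive. nra. }
  apply continuity_pt_filterlim. exact HC.
Qed.

Lemma zero_main :
  exists M : nat -> R,
    (forall n, (1 <= n)%nat -> is_max_over_P n rho (fun Q => alphaDiv n 0 Q (fun _ => unif n)) (M n)) /\
    Un_cv M (DeltaAlpha 0 rho) /\ (forall n, (1 <= n)%nat -> M n <= DeltaAlpha 0 rho).
Proof.
  apply (assemble rho 0 psi0 Psi0 g0 (DeltaAlpha 0 rho) bs0); auto.
  - intros; apply Hcl0; auto.
  - intros; apply H1D0; auto.
  - intros; apply Hg0; auto.
  - intros; apply Hle0; auto.
  - apply bs0_range.
  - apply g0_bs.
  - apply g0_cont.
Qed.
End Zero.

Lemma KL_alpha n b Q : (1 <= n)%nat -> 1 < b ->
  alphaDiv n 1 Q (fun _ => unif n) = ln b * KL n b Q (fun _ => unif n) + 1 - rsum n Q.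
Proof.
  intros Hn Hb. assert (Np : 0 < INR n) by (apply lt_0_INR; lia).
  assert (Lb : 0 < ln b) by (apply ln_pos_gt; auto).
  unfold alphaDiv, KL, unif.
  rewrite (rsum_ext n _ (fun x => ln b * (Q x * log_b b (Q x / / INR n)) + (-1) * Q x + / INR n)).
  - rewrite rsum_lin. field. lra.
  - intros i Hi. unfold u_alpha. destruct (Req_EM_T 1 1); [|congruence]. unfold log_b. field. lra.
Qed.

Lemma part1 al rho : 1 < rho ->
  exists M : nat -> R,
    (forall n, (1 <= n)%nat -> is_max_over_P n rho (fun Q => alphaDiv n al Q (fun _ => unif n)) (M n)) /\
    Un_cv M (DeltaAlpha al rho).
Proof.
  intros Hr.
  destruct (Req_dec al 1) as [E|E]. subst. destruct (one_main rho Hr) as [M [A [B _]]]. exists M; auto.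
  destruct (Req_dec al 0) as [E0|E0]. subst. destruct (zero_main rho Hr) as [M [A [B _]]]. exists M; auto.
  destruct (gen_main al rho E0 E Hr) as [M [A [B _]]]. exists M; auto.
Qed.

Theorem mainTheorem9 :
  (forall (alpha rho : R), 1 < rho ->
     exists M : nat -> R,
       (forall n : nat, (1 <= n)%nat ->
          is_max_over_P n rho (fun Q => alphaDiv n alpha Q (fun _ => unif n)) (M n)) /\
       Un_cv M (DeltaAlpha alpha rho)) /\
  (forall (b rho : R), 1 < b -> 1 < rho ->
     (forall n : nat, (2 <= n)%nat -> forall Q, in_P n rho Q ->
        KL n b Q (fun _ => unif n) <=
          rho * log_b b rho / (rho - 1) - log_b b (exp 1 * rho * ln rho / (rho - 1))) /\
     exists M : nat -> R,
       (forall n : nat, (1 <= n)%nat ->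
          is_max_over_P n rho (fun Q => KL n b Q (fun _ => unif n)) (M n)) /\
       Un_cv M (rho * log_b b rho / (rho - 1) - log_b b (exp 1 * rho * ln rho / (rho - 1)))).
Proof.
  split. apply part1.
  intros b rho Hb Hr.
  assert (Lb : 0 < ln b) by (apply ln_pos_gt; auto).
  assert (ET : rho * log_b b rho / (rho - 1) - log_b b (exp 1 * rho * ln rho / (rho - 1))
               = DeltaAlpha 1 rho / ln b).
  { unfold DeltaAlpha. destruct (Req_EM_T 1 1); [|congruence]. unfold log_b. field. lra. }
  rewrite ET.
  destruct (one_main rho Hr) as [M [HM [HC HL]]].
  assert (EK : forall n Q, (1 <= n)%nat -> in_P n rho Q ->
     KL n b Q (fun _ => unif n) = alphaDiv n 1 Q (fun _ => unif n) / ln b).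
  { intros n Q Hn [_ [Hs _]]. rewrite (KL_alpha n b Q Hn Hb), Hs. field. lra. }
  split.
  - intros n Hn Q HQ. rewrite EK by (auto; lia).
    destruct (HM n ltac:(lia)) as [_ H2]. pose proof (H2 Q HQ). pose proof (HL n ltac:(lia)).
    unfold Rdiv. apply Rmult_le_compat_r. left; apply Rinv_0_lt_compat; auto. lra.
  - exists (fun n => M n / ln b). split.
    + intros n Hn. destruct (HM n Hn) as [[Q [HQ EQ]] H2]. split.
      * exists Q. split; auto. rewrite EK, EQ; auto.
      * intros Q' HQ'. rewrite EK by auto. pose proof (H2 Q' HQ').
        unfold Rdiv. apply Rmult_le_compat_r. left; apply Rinv_0_lt_compat; auto. lra.
    + intros eps He. destruct (HC (eps * ln b)) as [N HN]. nra.
      exists N. intros n Hn. specialize (HN n Hn). unfold R_dist in *.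
      replace (M n / ln b - DeltaAlpha 1 rho / ln b) with ((M n - DeltaAlpha 1 rho) / ln b) by (field; lra).
      unfold Rdiv. rewrite Rabs_mult, Rabs_inv, (Rabs_pos_eq (ln b)) by lra.
      apply (Rmult_lt_reg_r (ln b)); auto. rewrite Rmult_assoc, Rinv_l by lra. lra.
Qed.
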